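(* Let $A$ be a strongly AUF algebra, let $M\in\mathrm{Coh}_{\mathrm L}(A)$ be a projective generator of $\mathrm{Coh}_{\mathrm L}(A)$, and let $B=\mathrm{End}_{A,-}(M)^{\mathrm{op}}$, so that $M$ is an $A$-$B$ bimodule. Let $\psi\in\mathrm{SLF}(A)$ and let ${}^\psi\mathrm{Tr}\in\mathrm{SLF}(B)$ be the right pseudotrace associated to $\psi$ and $M$. Then $\psi$ is non-degenerate if and only if ${}^\psi\mathrm{Tr}$ is non-degenerate.
   Context: All algebras are associative $\mathbb C$-algebras, not necessarily unital. An idempotent is an element $e$ with $e^2=e$. An algebra $A$ is AUF if there is a family $(e_i)_{i\in\mathfrak I}$ of mutually orthogonal idempotents with $\dim e_iAe_j<\infty$ for all $i,j$ and $A=\sum_{i,j}e_iAe_j$. A left $A$-module $M$ is quasicoherent if $\xi\in A\xi$ for all $\xi\in M$, coherent if quasicoherent and finitely generated; $\mathrm{Coh}_{\mathrm L}(A)$ is the category of coherent left $A$-modules. Irreducible means nonzero with no nonzero proper submodules. An idempotent $e\in A$ is generating if every irreducible quasicoherent left $A$-module is a quotient of $Ae$; $A$ is strongly AUF if it is AUF and has a generating idempotent. A projective generator of $\mathrm{Coh}_{\mathrm L}(A)$ is an object that is projective as a left $A$-module and such that every object of $\mathrm{Coh}_{\mathrm L}(A)$ is a quotient of a finite direct sum of copies of it. $B=\mathrm{End}_{A,-}(M)^{\mathrm{op}}$ (left $A$-module endomorphisms, opposite multiplication) acts on the right of $M$ by $\xi\cdot T=T(\xi)$. $\mathrm{SLF}(C)$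 is the space of linear $\phi:C\to\mathbb C$ with $\phi(xy)=\phi(yx)$; such $\phi$ is non-degenerate if $\{x\in C:\phi(xy)=0\ \forall y\in C\}=0$. Right pseudotrace: choose an idempotent $e\in A$ and finitely many left $A$-module maps $\beta_j:Ae\to M$, $\check\beta^j:M\to Ae$ with $\sum_j\beta_j\circ\check\beta^j=\mathrm{id}_M$ (such exist); then ${}^\psi\mathrm{Tr}(y)=\sum_j\psi\big(\check\beta^j(\beta_j(e)y)\big)$ for $y\in B$, which is independent of the choices and lies in $\mathrm{SLF}(B)$. *)

(* Defs.v *)
From HB Require Import structures.
From mathcomp Require Import all_boot all_order all_algebra.
From mathcomp Require Import complex Rstruct.

Set Implicit Arguments.
Unset Strict Implicit.
Unset Printing Implicit Defensive.

Import Order.TTheory GRing.Theory Num.Theory.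
Local Open Scope ring_scope.

Definition C : numClosedFieldType := (Rdefinitions.R)[i].

Record nuAlg := NuAlg {
  alg_car :> lmodType C;
  amul : alg_car -> alg_car -> alg_car;
  amulA : forall x y z, amul x (amul y z) = amul (amul x y) z;
  amul_linl : forall (c : C) x y z, amul (c *: x + y) z = c *: amul x z + amul y z;
  amul_linr : forall (c : C) x y z, amul x (c *: y + z) = c *: amul x y + amul x z
}.

Record lmodule (A : nuAlg) := LModule {
  mod_car :> lmodType C;
  act : A -> mod_car -> mod_car;
  actA : forall (a b : A) m, act (amul a b) m = act a (act b m);
  act_linl : forall (c : C) (a b : A) m, act (c *: a + b) m = c *: act a m + act b m;
  act_linr : forall (c : C) (a : A) m n, act a (c *: m + n) = c *: act a m + act a n
}.

Section Defs.
Variable A : nuAlg.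

Definition idempotent (e : A) : Prop := amul e e = e.

Definition clinear (V W : lmodType C) (f : V -> W) : Prop :=
  forall (c : C) x y, f (c *: x + y) = c *: f x + f y.

Definition modmap (M N : lmodule A) (f : M -> N) : Prop :=
  clinear f /\ forall (a : A) m, f (act a m) = act a (f m).

Definition submodule (M : lmodule A) (P : M -> Prop) : Prop :=
  [/\ P 0,
      forall (c : C) x y, P x -> P y -> P (c *: x + y)
    & forall (a : A) x, P x -> P (act a x)].

Definition quasicoherent (M : lmodule A) : Prop :=
  forall xi : M, exists a : A, act a xi = xi.

Definition fin_generated (M : lmodule A) : Prop :=
  exists (n : nat) (g : 'I_n -> M),
    forall xi : M, forall P : M -> Prop,
      submodule P -> (forall k, P (g k)) -> P xi.

Definition coherent (M : lmodule A) : Prop :=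
  quasicoherent M /\ fin_generated M.

Definition irreducible (M : lmodule A) : Prop :=
  (exists xi : M, xi <> 0) /\
  forall P : M -> Prop, submodule P ->
    (forall x, P x -> x = 0) \/ (forall x, P x).

Definition inAe (e : A) (x : A) : Prop := exists a : A, x = amul a e.

(* A left A-module map  A e -> N, represented by a function on A whose values
   outside A e are irrelevant. *)
Definition modmap_from_Ae (e : A) (N : lmodule A) (g : A -> N) : Prop :=
  (forall (c : C) x y, inAe e x -> inAe e y -> g (c *: x + y) = c *: g x + g y) /\
  (forall (a : A) x, inAe e x -> g (amul a x) = act a (g x)).

Definition modmap_to_Ae (e : A) (N : lmodule A) (h : N -> A) : Prop :=
  (forall m, inAe e (h m)) /\ clinear h /\
  (forall (a : A) m, h (act a m) = amul a (h m)).

Definition quotient_of_Ae (e : A) (N : lmodule A) : Prop :=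
  exists g : A -> N, modmap_from_Ae e g /\
    forall y : N, exists2 x, inAe e x & g x = y.

Definition AUF : Prop :=
  exists (I : Type) (E : I -> A),
    [/\ (forall i, idempotent (E i)),
        (forall i j, i <> j -> amul (E i) (E j) = 0),
        (* dim e_i A e_j < oo : spanned by finitely many of its elements *)
        (forall i j, exists (n : nat) (v : 'I_n -> A),
            (forall k, exists a, v k = amul (amul (E i) a) (E j)) /\
            forall a : A, exists c : 'I_n -> C,
              amul (amul (E i) a) (E j) = \sum_(k < n) c k *: v k)
      &
        forall a : A, exists (n : nat) (p : 'I_n -> I * I) (x : 'I_n -> A),
          a = \sum_(k < n) amul (amul (E (p k).1) (x k)) (E (p k).2)].

Definition generating_idempotent (e : A) : Prop :=
  idempotent e /\
  forall N : lmodule A, irreducible N -> quasicoherent N -> quotient_of_Ae e N.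

Definition strongly_AUF : Prop := AUF /\ exists e : A, generating_idempotent e.

Definition projective (M : lmodule A) : Prop :=
  forall (N N' : lmodule A) (p : N -> N') (f : M -> N'),
    modmap p -> (forall y : N', exists x, p x = y) -> modmap f ->
    exists g : M -> N, modmap g /\ forall m, p (g m) = f m.

(* N is a quotient of a finite direct sum M^n, i.e. there are module maps
   f_1..f_n : M -> N with (x_k)_k |-> sum_k f_k x_k surjective *)
Definition quotient_of_fin_sum (M N : lmodule A) : Prop :=
  exists (n : nat) (f : 'I_n -> M -> N), (forall k, modmap (f k)) /\
    forall y : N, exists x : 'I_n -> M, y = \sum_(k < n) f k (x k).

Definition projective_generator_Coh (M : lmodule A) : Prop :=
  [/\ coherent M, projective M &
      forall N : lmodule A, coherent N -> quotient_of_fin_sum M N].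

Definition SLF_A (psi : A -> C) : Prop :=
  clinear (psi : A -> C^o) /\ forall x y, psi (amul x y) = psi (amul y x).

Definition nondegenerate_A (psi : A -> C) : Prop :=
  forall x : A, (forall y : A, psi (amul x y) = 0) -> x = 0.

(* elements of B are the module endomorphisms of M; the product of B is
   the opposite of composition:  y *_B z = z \o y  *)
Definition Bmul (M : lmodule A) (y z : M -> M) : M -> M := fun xi => z (y xi).

Definition nondegenerate_B (M : lmodule A) (T : (M -> M) -> C) : Prop :=
  forall y : M -> M, modmap y ->
    (forall z : M -> M, modmap z -> T (Bmul y z) = 0) ->
    forall xi, y xi = 0.

(* data for the right pseudotrace: an idempotent e and module maps
   beta_j : A e -> M, betac_j : M -> A e with sum_j beta_j o betac_j = id_M *)
Definition pseudotrace_data (M : lmodule A) (e : A) (n : nat)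
    (beta : 'I_n -> A -> M) (betac : 'I_n -> M -> A) : Prop :=
  [/\ idempotent e,
      (forall j, modmap_from_Ae e (beta j)),
      (forall j, modmap_to_Ae e (betac j))
    & forall xi : M, \sum_(j < n) beta j (betac j xi) = xi].

(* ^psi Tr (y) = sum_j psi (betac_j (beta_j(e) . y)),  where xi . y = y xi *)
Definition right_pseudotrace (psi : A -> C) (M : lmodule A) (e : A) (n : nat)
    (beta : 'I_n -> A -> M) (betac : 'I_n -> M -> A) (y : M -> M) : C :=
  \sum_(j < n) psi (betac j (y (beta j e))).

End Defs.

(* Main.v *)
Require Import Defs.
From HB Require Import structures.
From mathcomp Require Import all_boot all_order all_algebra.
From mathcomp Require Import complex Rstruct.
From Stdlib Require Import Classical.
Set Implicit Arguments. Unset Strict Implicit. Unset Printing Implicit Defensive.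
Import GRing.Theory.
Local Open Scope ring_scope.

Section Lin.
Variables (V W : lmodType C) (f : V -> W) (hf : clinear f).
Lemma clin0 : f 0 = 0.
Proof. have H := hf 1 0 0; rewrite !scale1r !addr0 in H.
by apply: (addrI (f 0)); rewrite addr0 -H. Qed.
Lemma clinD x y : f (x + y) = f x + f y.
Proof. by have := hf 1 x y; rewrite !scale1r. Qed.
Lemma clin_sum n (g : 'I_n -> V) : f (\sum_(k < n) g k) = \sum_(k < n) f (g k).
Proof. exact: (big_morph f clinD clin0). Qed.
End Lin.

Lemma clin_comp (U V W : lmodType C) (f : U -> V) (g : V -> W) :
  clinear f -> clinear g -> clinear (fun x => g (f x)).
Proof. by move=> hf hg c x y; rewrite hf hg. Qed.

Section Alg.
Variable A : nuAlg.
Lemma amul_linL (z : A) : clinear (fun x : A => amul x z).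
Proof. move=> c x y; exact: amul_linl. Qed.
Lemma amul_linR (x : A) : clinear (amul x).
Proof. move=> c y z; exact: amul_linr. Qed.
Lemma amul0l (z : A) : amul 0 z = 0.
Proof. exact: (clin0 (amul_linL z)). Qed.
Lemma amul0r (x : A) : amul x 0 = 0.
Proof. exact: (clin0 (amul_linR x)). Qed.
Lemma amulDl (x y z : A) : amul (x + y) z = amul x z + amul y z.
Proof. exact: (clinD (amul_linL z)). Qed.
Lemma amulDr (x y z : A) : amul x (y + z) = amul x y + amul x z.
Proof. exact: (clinD (amul_linR x)). Qed.

Section Mod.
Variable M : lmodule A.
Lemma act_linL (m : M) : clinear (fun a : A => act a m).
Proof. move=> c x y; exact: act_linl. Qed.
Lemma act_linR (a : A) : clinear (@act A M a).
Proof. move=> c x y; exact: act_linr. Qed.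
Lemma act0l (m : M) : act 0 m = 0.
Proof. exact: (clin0 (act_linL m)). Qed.
Lemma act0r (a : A) : act a (0 : M) = 0.
Proof. exact: (clin0 (act_linR a)). Qed.
End Mod.

Section LU.
Variables (I : Type) (E : I -> A) (hid : forall i, amul (E i) (E i) = E i)
  (horth : forall i j, i <> j -> amul (E i) (E j) = 0).

Definition linv (u : A) := amul u u = u /\ forall i,
  (amul u (E i) = E i /\ amul (E i) u = E i) \/ (amul u (E i) = 0 /\ amul (E i) u = 0).

Lemma linv0 : linv 0.
Proof. split; first exact: amul0l. by move=> i; right; rewrite amul0l amul0r. Qed.

Lemma linv_add u i : linv u -> exists u', [/\ linv u', amul u' (E i) = E i,
  amul (E i) u' = E i & forall k, (amul u (E k) = E k -> amul u' (E k) = E k) /\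
     (amul (E k) u = E k -> amul (E k) u' = E k)].
Proof.
move=> [uu hu]; case: (hu i) => [[h1 h2]|[h1 h2]].
  by exists u; split => //; split.
have hi : amul (E i) (E i) = E i := hid i.
exists (u + E i); split.
- split; first by rewrite amulDl !amulDr uu h1 h2 hi addr0 add0r.
  move=> k; case: (classic (k = i)) => [->|nki].
    by left; rewrite amulDl amulDr h1 h2 hi add0r.
  have o1 := horth nki; have o2 : amul (E i) (E k) = 0 by apply: horth => /esym.
  by rewrite amulDl amulDr o1 o2 !addr0; apply: hu.
- by rewrite amulDl h1 hi add0r.
- by rewrite amulDr h2 hi add0r.
- move=> k; split=> hk.
    by rewrite amulDl -{2}hk amulA h2 amul0l addr0.
  by rewrite amulDr -{2}hk -amulA h1 amul0r addr0.
Qed.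

Lemma linv_many n (p : nat -> I * I) : exists u, linv u /\ forall k, (k < n)%N ->
  amul u (E (p k).1) = E (p k).1 /\ amul (E (p k).2) u = E (p k).2.
Proof.
elim: n => [|n [u [hu hk]]]; first by exists 0; split => //; exact: linv0.
have [u1 [hu1 a1 b1 c1]] := linv_add (p n).1 hu.
have [u2 [hu2 a2 b2 c2]] := linv_add (p n).2 hu1.
exists u2; split => // k; rewrite ltnS leq_eqVlt => /orP [/eqP ->|kn].
  by split => //; apply: (c2 _).1.
have [l r] := hk k kn.
by split; [apply: (c2 _).1; apply: (c1 _).1 | apply: (c2 _).2; apply: (c1 _).2].
Qed.

Lemma local_unit (a : A) : (exists (n : nat) (p : 'I_n -> I * I) (x : 'I_n -> A),
          a = \sum_(k < n) amul (amul (E (p k).1) (x k)) (E (p k).2)) ->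
  exists u, [/\ amul u u = u, amul u a = a & amul a u = a].
Proof.
case=> [[|m] [p [x ->]]].
  by exists 0; rewrite big_ord0 !amul0l.
have [u [[uu _] hk]] := linv_many m.+1 (fun k => p (inord k)).
exists u; split => //.
  rewrite (clin_sum (amul_linR u)); apply: eq_bigr => k _.
  have [l _] := hk k (ltn_ord k); rewrite inord_val in l.
  by rewrite !amulA l.
rewrite (clin_sum (amul_linL u)); apply: eq_bigr => k _.
have [_ r] := hk k (ltn_ord k); rewrite inord_val in r.
by rewrite -amulA r.
Qed.
End LU.

Section Sub.
Variable (u : A).
Definition Afp : {pred A} := fun x => amul x u == x.
Lemma Afp_closed : submod_closed Afp.
Proof.
split; first by rewrite /Afp unfold_in /= amul0l.
move=> c x y; rewrite /Afp !unfold_in /= => /eqP hx /eqP hy.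
by rewrite amul_linl hx hy.
Qed.
HB.instance Definition _ := GRing.isSubmodClosed.Build C A Afp Afp_closed.
Record Af := MkAf { afval :> A ; afP : afval \in Afp }.
HB.instance Definition _ := [isSub for afval].
HB.instance Definition _ := [Choice of Af by <:].
HB.instance Definition _ := [SubChoice_isSubLmodule of Af by <:].

Lemma afval_lin : clinear (afval : Af -> A).
Proof. by []. Qed.

Lemma afact_subproof (a : A) (m : Af) : amul a (afval m) \in Afp.
Proof.
by rewrite /Afp unfold_in /= -amulA (eqP (afP m)).
Qed.
Definition afact (a : A) (m : Af) : Af := MkAf (afact_subproof a m).

Lemma afactA (a b : A) m : afact (amul a b) m = afact a (afact b m).
Proof. by apply: val_inj; rewrite /= amulA. Qed.
Lemma afact_linl (c : C) (a b : A) m : afact (c *: a + b) m = c *: afact a m + afact b m.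
Proof. by apply: val_inj; rewrite /= amul_linl. Qed.
Lemma afact_linr (c : C) (a : A) m n : afact a (c *: m + n) = c *: afact a m + afact a n.
Proof. by apply: val_inj; rewrite /= amul_linr. Qed.

Definition AfMod : lmodule A := LModule afactA afact_linl afact_linr.
End Sub.
End Alg.


Lemma psi_sum (A : nuAlg) (psi : A -> C) (hpsi : SLF_A psi) n (g : 'I_n -> A) :
  psi (\sum_(k < n) g k) = \sum_(k < n) psi (g k).
Proof. exact: (clin_sum hpsi.1 g). Qed.

Lemma inAe_r (A : nuAlg) (e x : A) : amul e e = e -> inAe e x -> amul x e = x.
Proof. by move=> he [a ->]; rewrite -amulA he. Qed.

Lemma dir1 (A : nuAlg) (M : lmodule A) (psi : A -> C) (hpsi : SLF_A psi)
  (e : A) (n : nat) (beta : 'I_n -> A -> M) (betac : 'I_n -> M -> A)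
  (hdata : pseudotrace_data e beta betac) :
  nondegenerate_A psi -> nondegenerate_B (right_pseudotrace psi e beta betac).
Proof.
case: hdata => he hb hbc hsum nd y hy H.
have heA : inAe e e by exists e.
have hm : forall w, inAe e (amul w e) by move=> w; exists w.
have hc : forall k0 j0, betac k0 (y (beta j0 e)) = 0.
  move=> k0 j0; apply: nd => b.
  pose z := fun xi => beta j0 (amul (amul (betac k0 xi) b) e).
  have hz : modmap z.
    split.
      move=> c x1 x2; rewrite /z (hbc k0).2.1 !amul_linl.
      by rewrite (hb j0).1.
    move=> a m; rewrite /z (hbc k0).2.2 -(hb j0).2 //.
    by rewrite !amulA.
  have := H z hz; rewrite /right_pseudotrace /Bmul /z => <-.
  transitivity (psi (amul (\sum_(j < n) amul (betac j (beta j0 e))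
       (betac k0 (y (beta j e)))) b)).
    congr (psi (amul _ b)).
    transitivity (betac k0 (y (\sum_(j < n) beta j (betac j (beta j0 e))))).
      by rewrite hsum.
    rewrite (clin_sum (clin_comp (proj1 hy) (hbc k0).2.1)).
    apply: eq_bigr => j _.
    rewrite -(hbc k0).2.2 -hy.2 -(hb j).2 //.
    by rewrite (inAe_r he ((hbc j).1 _)).
  rewrite (clin_sum (amul_linL b)) psi_sum //.
  apply: eq_bigr => j _.
  by rewrite (hb j0).2 // (hbc j).2.2 -amulA hpsi.2.
move=> xi; rewrite -[y xi]hsum; apply: big1 => k _.
have -> : betac k (y xi) = 0.
  rewrite -[xi]hsum (clin_sum (clin_comp (proj1 hy) (hbc k).2.1)).
  apply: big1 => j _.
  have [a ->] := (hbc j).1 xi.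
  by rewrite (hb j).2 // hy.2 (hbc k).2.2 hc amul0r.
by rewrite -(amul0l e) (hb k).2 // act0l.
Qed.

Lemma dir2 (A : nuAlg) (M : lmodule A) (psi : A -> C)
  (hA : strongly_AUF A) (hM : projective_generator_Coh M) (hpsi : SLF_A psi)
  (e : A) (n : nat) (beta : 'I_n -> A -> M) (betac : 'I_n -> M -> A)
  (hdata : pseudotrace_data e beta betac) :
  nondegenerate_B (right_pseudotrace psi e beta betac) -> nondegenerate_A psi.
Proof.
case: hdata => he hb hbc hsum nd x hx.
case: hA => [[I [E [hid horth _ hdec]]] _].
have LU := local_unit hid horth.
have [u [uu ux xu]] := LU x (hdec x).
pose N := AfMod u.
have ugP : u \in Afp u by rewrite unfold_in /Afp /= uu.
pose ug : N := MkAf ugP.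
have cohN : coherent N.
  split.
    move=> xi; have [v [_ vx _]] := LU (afval xi) (hdec _).
    by exists v; apply: val_inj.
  exists 1%N, (fun _ => ug) => xi P [P0 Plin Pact] hg.
  have -> : xi = act (afval xi) ug.
    by apply: val_inj; rewrite /= (eqP (afP xi)).
  by apply: Pact; apply: (hg ord0).
case: hM => _ _ /(_ N cohN) [n' [f [hf hsurj]]].
have [m hm] := hsurj ug.
pose Y l k := fun xi : M => act (amul (afval (f l xi)) x) (m k).
have hY : forall l k, modmap (Y l k).
  move=> l k; split.
    move=> c x1 x2; rewrite /Y (hf l).1 afval_lin amul_linl.
    by rewrite act_linl.
  move=> a xi; rewrite /Y (hf l).2.
  by rewrite -actA amulA.
have hY0 : forall l k xi, Y l k xi = 0.
  move=> l k; apply: (nd _ (hY l k)) => z hz.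
  rewrite /right_pseudotrace /Bmul; apply: big1 => j _.
  rewrite /Y hz.2 (hbc j).2.2.
  by rewrite -amulA hpsi.2 -amulA hx.
have hw : forall l, amul (afval (f l (m l))) x = 0.
  move=> l; set w := amul _ x.
  have E0 : \sum_(k < n') f k (Y l k (m l)) = 0.
    by apply: big1 => k _; rewrite hY0 (clin0 (hf k).1).
  have E1 : \sum_(k < n') f k (Y l k (m l)) = act w ug.
    rewrite hm (clin_sum (act_linR w)); apply: eq_bigr => k _.
    by rewrite /Y (hf k).2.
  have := congr1 (@afval A u) (etrans (esym E1) E0).
  by rewrite /= /w -amulA xu.
rewrite -ux.
have -> : u = afval ug by [].
rewrite hm (clin_sum (@afval_lin A u)) (clin_sum (amul_linL x)).
by apply: big1 => l _; apply: hw.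
Qed.

Theorem theorem10p4 (A : nuAlg) (M : lmodule A) (psi : A -> C)
  (hA : strongly_AUF A) (hM : projective_generator_Coh M) (hpsi : SLF_A psi)
  (e : A) (n : nat) (beta : 'I_n -> A -> M) (betac : 'I_n -> M -> A)
  (hdata : pseudotrace_data e beta betac) :
  nondegenerate_A psi <-> nondegenerate_B (right_pseudotrace psi e beta betac).
Proof.
split; first exact: dir1.
exact: dir2.
Qed.
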